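(* Let $\mathcal S=\{s_1,\dots,s_k\}\subseteq\Sigma^n$. Let $s^*_H$ be the lexicographically minimal string among all strings $t\in\Sigma^n$ minimizing $\sum_{j}\partial_{Ham}(s_j,t)$, and let $s^*_{SH}$ be the lexicographically minimal string among all strings $t\in\Sigma^n$ minimizing $\sum_j\partial_{SH}(s_j,t)$. Then for every $i\in[1..n]$ with $s^*_{SH}[i]\ne s^*_H[i]$, we have $SW(\mathcal S,s^*_{SH},i-1)\ne\emptyset$ or $SW(\mathcal S,s^*_{SH},i)\ne\emptyset$.
   Context: The swap at position $p$ exchanges the letters at $p,p+1$; a swap permutation is a set of swaps at positions pairwise differing by at least $2$; equal-length strings are matching if a swap permutation transforms one into the other. Swap distance $\partial_S(u,v)$: $+\infty$ if not matching, else the number of swaps in the unique swap permutation from $u$ to $v$ never swapping identical letters. Swap+Hamming distance $\partial_{SH}(u,v)=\min_t\big(\partial_S(u,v')\ldots\big)$, precisely $\partial_{SH}(u,v)=\min_{t}\big(\partial_S(u,t)+\partial_{Ham}(t,v)\big)$. Greedy swaps: for strings $t,s$ of equal length, scanning $i=1,2,\dots$ left to right, a swap is counted at position $i$ iff $t[i]\ne t[i+1]$, $t[i]=s[i+1]$, $t[i+1]=s[i]$, and no swap was counted at position $i-1$ (this greedy procedure realizes $\partial_{SH}$). For a string $t$ and position $i$, $SW(\mathcal S,t,i)$ is the set of indices $j\in[1..k]$ such that the greedy procedure applied to $(t,s_j)$ counts a swap at position $i$ (with $SW(\mathcal S,t,0)=\emptyset$). *)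

(* Defs.v *)
(* Strings of length n over a finite totally ordered
   alphabet T are n.-tuples; positions are 0-based ('I_n). *)
From mathcomp Require Import all_boot all_order.
Set Implicit Arguments. Unset Strict Implicit. Unset Printing Implicit Defensive.
Import Order.TTheory.

Section StringDefs.
Context {d : Order.disp_t} {T : finOrderType d} {n : nat}.

Definition ham (u v : n.-tuple T) : nat := #|[set i : 'I_n | tnth u i != tnth v i]|.

(* A swap permutation: a set P of positions p (0-based; swap at p exchanges
   letters at p and p+1, so p+1 < n), pairwise differing by at least 2. *)
Definition swap_perm (P : {set 'I_n}) : bool :=
  [forall p in P, (val p).+1 < n] &&
  [forall p in P, forall q in P, (p != q) ==> ((val p).+2 <= val q) || ((val q).+2 <= val p)].

Definition swap_partner (P : {set 'I_n}) (i : 'I_n) : 'I_n :=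
  odflt i [pick j : 'I_n | ((i \in P) && (val j == (val i).+1))
                         || ((j \in P) && ((val j).+1 == val i))].

Definition apply_swaps (P : {set 'I_n}) (u : n.-tuple T) : n.-tuple T :=
  [tuple tnth u (swap_partner P i) | i < n].

Definition no_identical (P : {set 'I_n}) (u : n.-tuple T) : bool :=
  [forall p in P, forall q : 'I_n, (val q == (val p).+1) ==> (tnth u p != tnth u q)].

Definition matching (u v : n.-tuple T) : bool :=
  [exists P : {set 'I_n}, swap_perm P && (apply_swaps P u == v)].

(* swap distance (only meaningful for matching u v; otherwise +oo and it is
   never used): the number of swaps in the (unique) swap permutation from u
   to v never swapping identical letters. *)
Definition dS (u v : n.-tuple T) : nat :=
  \big[minn/n]_(P : {set 'I_n} | [&& swap_perm P, no_identical P u & apply_swaps P u == v]) #|P|.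

(* swap+Hamming distance: min over t of dS(u,t) + Ham(t,v); terms with
   dS(u,t) = +oo (t not matching u) are omitted. The value is <= Ham(u,v) <= n,
   so the neutral element n of minn is harmless. *)
Definition dSH (u v : n.-tuple T) : nat :=
  \big[minn/n]_(t : n.-tuple T | matching u t) (dS u t + ham t v).

Definition lex_lt (u v : n.-tuple T) : bool :=
  [exists i : 'I_n, [forall j : 'I_n, (val j < val i) ==> (tnth u j == tnth v j)]
                    && (tnth u i < tnth v i)%O].

Definition swap_cond (t s : n.-tuple T) (i : nat) : bool :=
  [exists p : 'I_n, exists q : 'I_n,
     [&& val p == i, val q == i.+1, tnth t p != tnth t q,
         tnth t p == tnth s q & tnth t q == tnth s p]].

Fixpoint greedy_swap (t s : n.-tuple T) (i : nat) : bool :=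
  match i with
  | 0 => swap_cond t s 0
  | i'.+1 => swap_cond t s i'.+1 && ~~ greedy_swap t s i'
  end.

(* SW(S, t, i) for 0-based position i *)
Definition SW {k : nat} (S : 'I_k -> n.-tuple T) (t : n.-tuple T) (i : nat) : {set 'I_k} :=
  [set j : 'I_k | greedy_swap t (S j) i].

Definition costH {k : nat} (S : 'I_k -> n.-tuple T) (t : n.-tuple T) : nat :=
  \sum_(j < k) ham (S j) t.
Definition costSH {k : nat} (S : 'I_k -> n.-tuple T) (t : n.-tuple T) : nat :=
  \sum_(j < k) dSH (S j) t.

Definition lex_min_minimizer (cost : n.-tuple T -> nat) (t : n.-tuple T) : Prop :=
  (forall t', cost t <= cost t') /\
  (forall t', (forall t'', cost t' <= cost t'') -> ~~ lex_lt t' t).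

End StringDefs.

(* Main.v *)
Require Import Defs.
From mathcomp Require Import all_boot all_order.
From mathcomp Require Import zify.
Set Implicit Arguments. Unset Strict Implicit. Unset Printing Implicit Defensive.

Definition ptn (Q : nat -> bool) x := if Q x then x.+1 else if (0 < x) && Q x.-1 then x.-1 else x.

Definition Phi (Q : nat -> bool) (F : nat -> nat) x :=
  if Q x then F x + F x.+1 else if (0 < x) && Q x.-1 then 0 else F x.

Lemma sum_decomp n (Q : nat -> bool) (F : nat -> nat) :
  (forall x, Q x -> x.+1 < n) -> (forall x, Q x -> ~~ Q x.+1) ->
  \sum_(0 <= x < n) F x = \sum_(0 <= x < n) Phi Q F x.
Proof.
move=> Qn Qg.
suff H : forall k, k <= n -> (k == 0) || ~~ Q k.-1 ->
  \sum_(0 <= x < k) F x = \sum_(0 <= x < k) Phi Q F x.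
  apply: H => //; case: n Qn {Qg} => [|m] Qn //=; apply/negP => /Qn; by rewrite ltnn.
elim/ltn_ind => k IH kn hk.
case: k IH kn hk => [|k] IH kn hk; first by rewrite !big_geq.
rewrite /= in hk.
case: (boolP ((0 < k) && Q k.-1)) => [/andP[k0 Qk]|nQ].
- case: k k0 Qk IH kn hk => [|j] // _ Qj IH kn hk.
  rewrite /= in hk Qj.
  rewrite !big_nat_recr //=.
  rewrite {2 3}/Phi (negbTE hk) Qj /=.
  rewrite IH //; last 2 first.
  + lia.
  + case: j Qj {IH kn hk} => [|j] Qj //=; apply/negP => /Qg; by rewrite Qj.
  by rewrite addnA addn0.
- rewrite big_nat_recr // [RHS]big_nat_recr //= {2}/Phi (negbTE hk) (negbTE nQ).
  rewrite IH //; first lia.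
  by case: k {IH kn hk} nQ => [|k] //=; rewrite lt0n.
Qed.
Lemma local_ineq (U : eqType) (a a' b b' : U) :
  (a != b) + (a' != b') <= (a' != b) + (a != b') + 1 + [&& b != b', b == a' & b' == a].
Proof.
case: (eqVneq a b) => [->|hab]; case: (eqVneq a' b') => [->|ha'b'] //=;
 case: (eqVneq b' b) => [e|nb] /=; try lia;
 case: (eqVneq b a') => [e1|n1] /=; try lia;
 case: (eqVneq b' a) => [e2|n2] /=; try lia.
all: subst; rewrite ?eqxx ?(negbTE hab) ?(negbTE ha'b') //=; try lia.
all: try rewrite eq_sym in nb; try rewrite eq_sym in n1; try rewrite eq_sym in n2.
all: rewrite ?(negbTE nb) ?(negbTE n1) ?(negbTE n2) /=; try lia.
all: by rewrite eqxx in hab.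
Qed.

Section Greedy.
Variables (U : eqType) (A B : nat -> U) (n : nat).

Definition goodn x := [&& x.+1 < n, B x != B x.+1, B x == A x.+1 & B x.+1 == A x].
Fixpoint gr x := match x with 0 => goodn 0 | k.+1 => goodn k.+1 && ~~ gr k end.
Definition mm x : nat := A x != B x.
Definition ee Q x : nat := A (ptn Q x) != B x.
Definition costn (Q : nat -> bool) := \sum_(0<=x<n) (Q x : nat) + \sum_(0<=x<n) ee Q x.

Lemma gr_good x : gr x -> goodn x. Proof. by case: x => //= k /andP[]. Qed.
Lemma gr_n x : gr x -> x.+1 < n. Proof. by move/gr_good/and4P=> []. Qed.
Lemma gr_gap x : gr x -> ~~ gr x.+1. Proof. by move=> h /=; rewrite h andbF. Qed.

Lemma partA : \sum_(0<=x<n) mm x = \sum_(0<=x<n) ee gr x + \sum_(0<=x<n) (gr x : nat) + \sum_(0<=x<n) (gr x : nat).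
Proof.
rewrite (sum_decomp mm gr_n gr_gap) (sum_decomp (ee gr) gr_n gr_gap) -!big_split.
apply: eq_bigr => x _; rewrite /Phi /ee /mm /ptn.
case: (boolP (gr x)) => g.
  have := gr_good g; rewrite /goodn => /and4P[_ h1 /eqP h2 /eqP h3].
  rewrite (negbTE (gr_gap g)) /= ?g h2 h3 !eqxx.
  rewrite h2 h3 in h1. by rewrite h1 (eq_sym (A x)) h1.
case: ifP => /= _; lia.
Qed.

Lemma partB (Q : nat -> bool) : (forall x, Q x -> x.+1 < n) -> (forall x, Q x -> ~~ Q x.+1) ->
  \sum_(0<=x<n) mm x <= \sum_(0<=x<n) ee Q x + \sum_(0<=x<n) (Q x : nat) + \sum_(0<=x<n) (Q x && goodn x : nat).
Proof.
move=> Qn Qg.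
rewrite (sum_decomp mm Qn Qg) (sum_decomp (ee Q) Qn Qg) -!big_split.
apply: leq_sum => x _; rewrite /Phi /ee /mm /ptn.
case: (boolP (Q x)) => q.
  rewrite (negbTE (Qg _ q)) /= ?q /goodn Qn //=.
  exact: local_ineq.
case: ifP => /= _; lia.
Qed.

Lemma partC (Q : nat -> bool) : (forall x, Q x -> ~~ Q x.+1) ->
  \sum_(0<=x<n) (Q x && goodn x : nat) <= \sum_(0<=x<n) (gr x : nat).
Proof.
move=> Qg.
suff H : forall k, \sum_(0<=x<k) (Q x && goodn x : nat) + [&& 0 < k, gr k.-1 & ~~ (Q k.-1 && goodn k.-1)]
   <= \sum_(0<=x<k) (gr x : nat).
  by apply: leq_trans (H n); rewrite leq_addr.
elim => [|k IH]; first by rewrite !big_geq.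
rewrite !big_nat_recr //=.
case: (boolP (gr k)) => g.
  move: IH; case: (Q k && goodn k); case: [&& _, _ & _] => /=; lia.
case: (boolP (Q k && goodn k)) => /= qk; last by move: IH; case: [&& _, _ & _] => /=; lia.
case: k IH g qk => [|k] IH g qk.
  move: g qk => /= g; by rewrite (negbTE g) andbF.
move: g => /=; case/andP: (qk) => Qk gk; rewrite gk /= negbK => gk'.
have nQ : ~~ (Q k && goodn k).
  apply/negP => /andP[/Qg]; by rewrite Qk.
move: IH; rewrite /= gk' nQ /=; lia.
Qed.

Lemma greedy_opt (Q : nat -> bool) : (forall x, Q x -> x.+1 < n) -> (forall x, Q x -> ~~ Q x.+1) ->
  costn gr <= costn Q.
Proof.
move=> Qn Qg; have := partA; have := partB Qn Qg; have := partC Qg.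
rewrite /costn; lia.
Qed.
End Greedy.

Import Order.TTheory.

Section Bridge.
Context {d : Order.disp_t} {T : finOrderType d} {n : nat}.

Definition ot (u : n.-tuple T) x : option T := nth None (map Some u) x.

Lemma ot_tnth u (i : 'I_n) : ot u i = Some (tnth u i).
Proof. by rewrite /ot (nth_map (tnth u i)) ?size_tuple // -tnth_nth. Qed.

Definition Pn (P : {set 'I_n}) x := [exists p in P, val p == x].

Lemma PnE P (i : 'I_n) : Pn P i = (i \in P).
Proof.
apply/existsP/idP => [[p /andP[pP /eqP/val_inj<-]]|iP] //.
by exists i; rewrite iP eqxx.
Qed.

Lemma sp_n P : swap_perm P -> forall x, Pn P x -> x.+1 < n.
Proof.
move=> /andP[/forallP h _] x /existsP[p /andP[pP /eqP<-]].
by have := h p; rewrite pP.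
Qed.

Lemma sp_gap P : swap_perm P -> forall x, Pn P x -> ~~ Pn P x.+1.
Proof.
move=> /andP[_ /forallP h] x /existsP[p /andP[pP /eqP ep]].
apply/negP => /existsP[q /andP[qP /eqP eq]].
have := h p; rewrite pP /= => /forallP/(_ q); rewrite qP /=.
have -> : p != q by apply/eqP => e; move: ep eq; rewrite e; lia.
have ep1 : nat_of_ord p = x := ep. have eq1 : nat_of_ord q = x.+1 := eq.
rewrite /=; lia.
Qed.

Lemma partnerE P i : swap_perm P -> val (swap_partner P i) = ptn (Pn P) i.
Proof.
move=> sP; rewrite /swap_partner /ptn PnE.
case: pickP => [j /orP[/andP[iP /eqP ->]|/andP[jP /eqP ej]] | none] /=.
- by rewrite iP.
- have ej' : (nat_of_ord j).+1 = nat_of_ord i := ej.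
  case iP: (i \in P).
    have := sp_gap sP (x := j); rewrite PnE jP ej' PnE iP; by move/(_ isT).
  by rewrite -ej' /= PnE jP.
- case iP: (i \in P).
    have h := sp_n sP (x := i); rewrite PnE iP in h.
    by have := none (Ordinal (h isT)); rewrite iP eqxx.
  case: ifP => // /andP[i0 /existsP[p /andP[pP /eqP ep]]].
  have ep' : nat_of_ord p = i.-1 := ep.
  by have := none p; rewrite pP iP /= ep prednK // eqxx.
Qed.

Lemma hamE (u v : n.-tuple T) : ham u v = \sum_(i < n) (tnth u i != tnth v i).
Proof.
rewrite /ham -sum1_card big_mkcond; apply: eq_bigr => i _; rewrite inE.
by case: (_ != _).
Qed.

Lemma costE P (s v : n.-tuple T) : swap_perm P ->
  #|P| + ham (apply_swaps P s) v = costn (ot s) (ot v) n (Pn P).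
Proof.
move=> sP; rewrite /costn /ee; congr (_ + _).
  rewrite -sum1_card big_mkcond big_mkord; apply: eq_bigr => i _; rewrite PnE.
  by case: (i \in P).
rewrite hamE big_mkord; apply: eq_bigr => i _.
by rewrite tnth_mktuple -partnerE // !ot_tnth.
Qed.

Lemma goodE (v s : n.-tuple T) x : swap_cond v s x = goodn (ot s) (ot v) n x.
Proof.
apply/existsP/idP.
  move=> [p /existsP[q /and5P[/eqP ep /eqP eq h1 h2 h3]]].
  have ep' : nat_of_ord p = x := ep. have eq' : nat_of_ord q = x.+1 := eq.
  subst x; rewrite /goodn -eq' !ot_tnth ltn_ord /=.
  by rewrite !(inj_eq (@Some_inj _)) h1 h2 h3.
case/and4P => h h1 h2 h3.
exists (Ordinal (ltnW h)); apply/existsP; exists (Ordinal h).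
have e1 := ot_tnth v (Ordinal (ltnW h)). have e2 := ot_tnth v (Ordinal h).
have e3 := ot_tnth s (Ordinal (ltnW h)). have e4 := ot_tnth s (Ordinal h).
rewrite /= in e1 e2 e3 e4.
move: h1 h2 h3; rewrite e1 e2 e3 e4 !(inj_eq (@Some_inj _)). move=> -> -> ->; by rewrite /= !eqxx.
Qed.

Lemma greedyE (v s : n.-tuple T) x : greedy_swap v s x = gr (ot s) (ot v) n x.
Proof. by elim: x => [|x IH] /=; rewrite goodE // IH. Qed.

Definition Gset (v s : n.-tuple T) := [set p : 'I_n | greedy_swap v s p].

Lemma PnG v s x : Pn (Gset v s) x = gr (ot s) (ot v) n x.
Proof.
apply/existsP/idP => [[p /andP[]]|h].
  by rewrite inE greedyE => g /eqP <-.
have xn : x < n by have := gr_n h; lia.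
by exists (Ordinal xn); rewrite inE greedyE h eqxx.
Qed.

Lemma spG v s : swap_perm (Gset v s).
Proof.
apply/andP; split; apply/forallP => p; apply/implyP; rewrite inE greedyE => g.
  exact: gr_n g.
apply/forallP => q; apply/implyP; rewrite inE greedyE => g'; apply/implyP => pq.
have npq : nat_of_ord p != nat_of_ord q by [].
have h1 : nat_of_ord q != (nat_of_ord p).+1.
  by apply/eqP => e; move: g'; rewrite e; move: (gr_gap g) => /negbTE ->.
have h2 : nat_of_ord p != (nat_of_ord q).+1.
  by apply/eqP => e; move: g; rewrite e; move: (gr_gap g') => /negbTE ->.
change (((nat_of_ord p).+1 < nat_of_ord q) || ((nat_of_ord q).+1 < nat_of_ord p)); apply/orP; lia.
Qed.

Lemma niG v s : no_identical (Gset v s) s.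
Proof.
apply/forallP => p; apply/implyP; rewrite inE greedyE => g.
apply/forallP => q; apply/implyP => /eqP eq.
have eq' : nat_of_ord q = p.+1 := eq.
move: (gr_good g); rewrite /goodn -eq' !ot_tnth /= => /and4P[_ h1 /eqP h2 /eqP h3].
apply/eqP => e; move: h1; by rewrite h2 h3 e eqxx.
Qed.

Lemma costn_ext (A B : nat -> option T) (Q Q' : nat -> bool) :
  (forall x, Q x = Q' x) -> costn A B n Q = costn A B n Q'.
Proof.
move=> h; rewrite /costn /ee /ptn; congr (_ + _); apply: eq_bigr => x _; by rewrite !h.
Qed.

Lemma G_opt v s P : swap_perm P ->
  #|Gset v s| + ham (apply_swaps (Gset v s) s) v <= #|P| + ham (apply_swaps P s) v.
Proof.
move=> sP; rewrite !costE // ?spG // (costn_ext _ _ (PnG v s)).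
apply: greedy_opt; [exact: sp_n | exact: sp_gap].
Qed.

Lemma ham_le (u v : n.-tuple T) : ham u v <= n.
Proof. by rewrite /ham; apply: leq_trans (max_card _) _; rewrite card_ord. Qed.

Lemma bigmin_ge (I : finType) (P : pred I) (F : I -> nat) m :
  m <= n -> (forall i, P i -> m <= F i) -> m <= \big[minn/n]_(i | P i) F i.
Proof.
move=> mn h; apply: (big_ind (fun x => m <= x)) => // x y hx hy.
by rewrite leq_min hx hy.
Qed.

Lemma bigmin_le (I : finType) (P : pred I) (F : I -> nat) i0 :
  P i0 -> \big[minn/n]_(i | P i) F i <= F i0.
Proof.
move=> h; have : i0 \in index_enum I := mem_index_enum i0.
elim: (index_enum I) => [//|a r IH]; rewrite inE big_cons => /orP[/eqP <-|/IH hr].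
  rewrite h; exact: geq_minl.
case: (P a) => //; exact: leq_trans (geq_minr _ _) hr.
Qed.

Lemma dSH_lower v s :
  #|Gset v s| + ham (apply_swaps (Gset v s) s) v <= dSH s v.
Proof.
set c := _ + _.
have cn : c <= n.
  apply: leq_trans (G_opt v s (P := set0) _) _.
    by apply/andP; split; apply/forallP => p; rewrite inE.
  by rewrite cards0 add0n ham_le.
apply: bigmin_ge => // t _.
rewrite /dS; apply: (big_ind (fun x => c <= x + ham t v)).
- by apply: leq_trans cn (leq_addr _ _).
- by move=> x y hx hy; rewrite addn_minl leq_min hx hy.
- by move=> P /and3P[sP _ /eqP <-]; apply: G_opt.
Qed.

Lemma dSH_upper v s w :
  dSH s w <= #|Gset v s| + ham (apply_swaps (Gset v s) s) w.
Proof.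
apply: leq_trans (bigmin_le _ (i0 := apply_swaps (Gset v s) s) _) _.
  by apply/existsP; exists (Gset v s); rewrite spG eqxx.
rewrite leq_add2r /dS; apply: bigmin_le.
by rewrite spG niG eqxx.
Qed.

Definition upd (u : n.-tuple T) (i : 'I_n) (c : T) : n.-tuple T :=
  [tuple if j == i then c else tnth u j | j < n].

Lemma ham_upd (w u : n.-tuple T) i c :
  ham w (upd u i c) + (tnth w i != tnth u i) = ham w u + (tnth w i != c).
Proof.
rewrite !hamE (bigD1 i) //= [in RHS](bigD1 i) //= tnth_mktuple eqxx.
under eq_bigr => j ji do rewrite tnth_mktuple (negbTE ji).
lia.
Qed.

Lemma lex_upd_lt u i c : (c < tnth u i)%O -> lex_lt (upd u i c) u.
Proof.
move=> h; apply/existsP; exists i; rewrite tnth_mktuple eqxx h andbT.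
apply/forallP => j; apply/implyP => ji; rewrite tnth_mktuple.
have : j != i by apply/eqP => e; rewrite e ltnn in ji.
by move/negbTE ->.
Qed.

Lemma lex_upd_inv u i c : lex_lt (upd u i c) u -> (c < tnth u i)%O.
Proof.
case/existsP => p /andP[_]; rewrite tnth_mktuple; case: eqP => [->//|_].
by rewrite ltxx.
Qed.

Lemma perj (v s : n.-tuple T) (i : 'I_n) c :
  ~~ greedy_swap v s i -> (0 < i -> ~~ greedy_swap v s i.-1) ->
  dSH s (upd v i c) + (tnth s i != tnth v i) <= dSH s v + (tnth s i != c).
Proof.
move=> g1 g2.
have ti : tnth (apply_swaps (Gset v s) s) i = tnth s i.
  rewrite tnth_mktuple; congr (tnth s _); apply: val_inj.
  rewrite partnerE ?spG // /ptn !PnG -!greedyE (negbTE g1).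
  by case: (boolP (0 < i)) => // /g2 /negbTE ->.
apply: leq_trans (leq_add (dSH_upper v s (upd v i c)) (leqnn _)) _.
rewrite -addnA -ti ham_upd addnA ti leq_add2r.
exact: dSH_lower.
Qed.
End Bridge.

Unset Implicit Arguments.

Theorem mainTheorem13 (d : Order.disp_t) (T : finOrderType d) (n k : nat)
  (S : 'I_k -> n.-tuple T) (sH sSH : n.-tuple T) :
  lex_min_minimizer (costH S) sH ->
  lex_min_minimizer (costSH S) sSH ->
  forall i : 'I_n, tnth sSH i != tnth sH i ->
    ((0 < val i) && (SW S sSH (val i).-1 != set0)) || (SW S sSH (val i) != set0).
Proof.
move=> [Hmin Hlex] [SHmin SHlex] i neq.
apply/idPn => Hc.
have Hj : forall j, ~~ greedy_swap sSH (S j) i /\ (0 < i -> ~~ greedy_swap sSH (S j) i.-1).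
  move: Hc; rewrite negb_or negb_and !negbK => /andP[h1 /eqP h2] j; split.
    have : j \notin SW S sSH i by rewrite h2 inE.
    by rewrite /SW inE.
  move=> i0; move: h1; have -> : (0 < \val i) = true := i0.
  move=> /= /eqP h1.
  have : j \notin SW S sSH i.-1 by rewrite h1 inE.
  by rewrite /SW inE.
set a := tnth sSH i; set c := tnth sH i.
set t' := upd sSH i c; set h' := upd sH i a.
have I1 : costSH S t' + \sum_(j < k) (tnth (S j) i != a)
          <= costSH S sSH + \sum_(j < k) (tnth (S j) i != c).
  rewrite /costSH -!big_split; apply: leq_sum => j _ /=.
  by case: (Hj j) => g1 g2; apply: perj.
have E2 : costH S h' + \sum_(j < k) (tnth (S j) i != c)
          = costH S sH + \sum_(j < k) (tnth (S j) i != a).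
  rewrite /costH -!big_split; apply: eq_bigr => j _ /=.
  exact: ham_upd.
have H1 := Hmin h'. have H2 := SHmin t'.
case: (ltgtP c a) => ca.
- have tmin : forall t'', costSH S t' <= costSH S t''.
    move=> t''; apply: leq_trans (SHmin t''); lia.
  by move: (SHlex t' tmin); rewrite lex_upd_lt.
- have hmin : forall t'', costH S h' <= costH S t''.
    move=> t''; apply: leq_trans (Hmin t''); lia.
  by move: (Hlex h' hmin); rewrite lex_upd_lt.
- by move: neq; rewrite -/a -/c ca eqxx.
Qed.
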